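(* Let $\mathbf M$ be an $(N+1,k)$-admissible and micro-reversible matrix with core $\widetilde{\mathbf M}$ and characteristic triple $(\mu,\widetilde{\mathbf w},\widetilde{\mathbf z})$; let $\mathbf K:=\frac1\mu\operatorname{diag}(\widetilde{\mathbf w})^{-1}\widetilde{\mathbf M}^\dagger\operatorname{diag}(\widetilde{\mathbf w})$ (the $Q$-process kernel) with stationary measure $\boldsymbol\pi=\widetilde{\mathbf w}\circ\widetilde{\mathbf z}$. Let $\mathbf p(t)$ solve $\frac{d\mathbf p}{dt}=(\mathbf M-\mathbf I)\mathbf p$ from a probability vector $\mathbf p(0)$ whose transient part $\widetilde{\mathbf p}(0)$ is nonzero, and set $\mathbf q(t):=\widetilde{\mathbf w}\circ\widetilde{\mathbf p}(t/\mu)/\langle\widetilde{\mathbf w},\widetilde{\mathbf p}(t/\mu)\rangle$. Then the evolution of $\mathbf p$ is variational in the sense that $\mathbf q$ is driven by the gradient flow $$\frac{d\mathbf q}{dt}=-\operatorname{grad}_{\mathcal W_N}H(\mathbf q\,|\,\boldsymbol\pi)$$ of the relative Boltzmann–Gibbs–Shannon entropy $H(\mathbf q|\boldsymbol\pi)=\sum_i q_i\log(q_i/\pi_i)$ with respect to the discrete Wasserstein structure $\mathcal W_N$ associated with $\mathbf K$, and the complete dynamics of $\mathbf p$ can be uniquely recovered from $\mathbf q$ (together with the initial datum $\mathbf p(0)$).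
   Context: Matrices are column-stochastic unless said otherwise; $\dagger$ is transpose, $\circ$ the entrywise product. For $1\le k<N-1$, an $(N+1)\times(N+1)$ column-stochastic $\mathbf M$ is $(N+1,k)$-admissible if, after a simultaneous permutation of rows and columns, $\mathbf M=\begin{pmatrix}\widetilde{\mathbf M}&\mathbf 0\\ \mathbf A&\mathbf I\end{pmatrix}$ with $\mathbf I$ the $k\times k$ identity, $\widetilde{\mathbf M}$ irreducible of size $N+1-k$ (the core, acting on the transient states; $\widetilde{\mathbf p}$ denotes the transient components of $\mathbf p$), and $\mathbf A$ with no zero row. The characteristic triple is $\mu=\rho(\widetilde{\mathbf M})\in(0,1)$ together with the positive left/right eigenvectors $\widetilde{\mathbf w},\widetilde{\mathbf z}$ for $\mu$ with $\langle\widetilde{\mathbf w},\mathbf 1\rangle=\langle\widetilde{\mathbf w},\widetilde{\mathbf z}\rangle=1$. $\mathbf M$ is micro-reversible if $\widetilde w_i\widetilde M_{ij}\widetilde z_j=\widetilde w_j\widetilde M_{ji}\widetilde z_i$ for all $i,j$; then $\mathbf K$ is irreducible, row-stochastic and reversible ($\pi_iK_{ij}=\pi_jK_{ji}$). Discrete Wasserstein distance (Maas): with the logarithmic mean $\beta(x,y)=\frac{x-y}{\log x-\log y}$ for $x\ne y$, $\beta(x,x)=x$, for probability densities $\mathbf Q^0,\mathbf Q^1$ w.r.t. $\boldsymbol\pi$ (nonnegative vectors with $\sum_iQ_i\pi_i=1$), $\mathcal W_N^2(\mathbf Q^0,\mathbf Q^1)$ is the infimum of $\frac12\int_0^1\sum_{i,j}|\psi_i^\tau-\psi_j^\tau|^2K_{ij}\beta(Q_i^\tau,Q_j^\tau)\pi_i\,d\tau$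 over piecewise $C^1$ curves $\tau\mapsto\mathbf Q^\tau$ of probability densities and measurable $\tau\mapsto\boldsymbol\psi^\tau$ with $\frac{d}{d\tau}Q_i^\tau+\sum_j(\psi_j^\tau-\psi_i^\tau)K_{ij}\beta(Q_i^\tau,Q_j^\tau)=0$ a.e. and endpoints $\mathbf Q^0,\mathbf Q^1$; a probability vector $\mathbf q$ is identified with its density $\mathbf Q=\mathbf q/\boldsymbol\pi$. On strictly positive densities this is a Riemannian metric, and the gradient of $F(\mathbf Q)=\sum_if(Q_i)\pi_i$ is given in coordinates by $[\operatorname{grad}_{\mathcal W_N}F(\mathbf Q)]_i=-\sum_jK_{ij}\beta(Q_i,Q_j)\big(f'(Q_j)-f'(Q_i)\big)$. *)

(* Defs.v *)
From HB Require Import structures.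
From mathcomp Require Import all_boot all_order all_algebra.
From mathcomp Require Import complex.
From mathcomp Require Import all_classical all_reals all_analysis.
Set Implicit Arguments.
Unset Strict Implicit.
Unset Printing Implicit Defensive.
Import Order.TTheory GRing.Theory Num.Theory.
Import numFieldNormedType.Exports.
Local Open Scope ring_scope.

Section Defs.
Variable R : realType.

Definition col_stochastic (n : nat) (M : 'M[R]_n) : Prop :=
  (forall i j, 0 <= M i j) /\ (forall j, \sum_i M i j = 1).

Definition irreducible_mx (n : nat) (A : 'M[R]_n) : Prop :=
  (forall i j, 0 <= A i j) /\ (forall i j, exists m : nat, 0 < (A ^+ m) i j).

Definition is_spectral_radius (n : nat) (A : 'M[R]_n) (r : R) : Prop :=
  let AC := map_mx (fun x : R => (x%:C)%C) A in
  (exists2 l : R[i], eigenvalue AC l & Normc.normc l = r) /\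
  (forall l : R[i], eigenvalue AC l -> Normc.normc l <= r).

Definition core (N k : nat) (M : 'M[R]_N.+1) (tr : 'I_(N.+1 - k) -> 'I_N.+1)
  : 'M[R]_(N.+1 - k) := \matrix_(i, j) M (tr i) (tr j).

(* (N+1,k)-admissibility: after the simultaneous relabelling of indices given by
   the transient states tr and absorbing states ab (together a bijection onto
   'I_(N+1), since they are injective, disjoint and (N+1-k)+k = N+1),
   M = [[Mt, 0], [A, I]] with Mt irreducible and A without zero row. *)
Definition admissible (N k : nat) (M : 'M[R]_N.+1)
  (tr : 'I_(N.+1 - k) -> 'I_N.+1) (ab : 'I_k -> 'I_N.+1) : Prop :=
  [/\ (1 <= k)%N /\ (k < N - 1)%N,
      col_stochastic M,
      injective tr /\ injective ab /\ (forall i a, tr i <> ab a),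
      (forall i b, M (tr i) (ab b) = 0) /\
      (forall a b, M (ab a) (ab b) = (a == b)%:R)
    & irreducible_mx (core M tr) /\
      (forall a, exists j, M (ab a) (tr j) <> 0)].

Definition char_triple (n : nat) (Mt : 'M[R]_n) (mu : R) (w z : 'I_n -> R)
  : Prop :=
  [/\ is_spectral_radius Mt mu /\ 0 < mu < 1,
      ((forall i, 0 < w i) /\ (forall i, 0 < z i)),
      ((forall j, \sum_i w i * Mt i j = mu * w j) /\
       (forall i, \sum_j Mt i j * z j = mu * z i))
    & (\sum_i w i = 1 /\ \sum_i w i * z i = 1)].

Definition micro_reversible (n : nat) (Mt : 'M[R]_n) (w z : 'I_n -> R) : Prop :=
  forall i j, w i * Mt i j * z j = w j * Mt j i * z i.

Definition Qkernel (n : nat) (Mt : 'M[R]_n) (mu : R) (w : 'I_n -> R)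
  : 'M[R]_n := \matrix_(i, j) (mu^-1 * (w i)^-1 * Mt j i * w j).

Definition statmeas (n : nat) (w z : 'I_n -> R) : 'I_n -> R := fun i => w i * z i.

Definition logmean (x y : R) : R :=
  if x == y then x else (x - y) / (ln x - ln y).

(* density of the relative Boltzmann-Gibbs-Shannon entropy:
   H(q|pi) = sum_i q_i log(q_i/pi_i) = sum_i f(Q_i) pi_i with Q = q/pi *)
Definition bgs (x : R) : R := x * ln x.

Definition Ffun (n : nat) (f : R -> R) (pi : 'I_n -> R) (Q : 'I_n -> R) : R :=
  \sum_i f (Q i) * pi i.

(* Wasserstein gradient of F(Q) = sum_i f(Q_i) pi_i w.r.t. the discrete
   Wasserstein structure W_N of the kernel K, in coordinates (Maas). *)
Definition Wgrad (n : nat) (K : 'M[R]_n) (f : R -> R) (Q : 'I_n -> R) (i : 'I_n)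
  : R :=
  - \sum_j K i j * logmean (Q i) (Q j) * (derive1 f (Q j) - derive1 f (Q i)).

Definition qflow (N k : nat) (p : R -> 'cV[R]_N.+1)
  (tr : 'I_(N.+1 - k) -> 'I_N.+1) (mu : R) (w : 'I_(N.+1 - k) -> R)
  (t : R) (i : 'I_(N.+1 - k)) : R :=
  w i * p (t / mu) (tr i) 0 / \sum_j w j * p (t / mu) (tr j) 0.

End Defs.

(* Main.v *)
Require Import Defs.
From HB Require Import structures.
From mathcomp Require Import all_boot all_order all_algebra.
From mathcomp Require Import complex.
From mathcomp Require Import all_classical all_reals all_analysis.
From mathcomp Require Import ring lra.
Set Implicit Arguments.
Unset Strict Implicit.
Unset Printing Implicit Defensive.
Import Order.TTheory GRing.Theory Num.Theory.
Import numFieldNormedType.Exports.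
Local Open Scope ring_scope.
Section B.
Variable R : realType.
Lemma sum_split N k (tr : 'I_(N.+1-k) -> 'I_N.+1) (ab : 'I_k -> 'I_N.+1)
  (F : 'I_N.+1 -> R) :
  (k <= N.+1)%N -> injective tr -> injective ab -> (forall i a, tr i <> ab a) ->
  \sum_x F x = \sum_i F (tr i) + \sum_a F (ab a).
Proof.
move=> kN itr iab dis.
pose A := [set tr x | x in 'I_(N.+1-k)].
pose B := [set ab x | x in 'I_k].
have dAB : [disjoint A & B].
  apply/pred0P => x /=; apply/negP => /andP[/imsetP[i _ ->] /imsetP[a _ e]].
  exact: dis e.
have cA : #|A| = (N.+1 - k)%N by rewrite card_imset // card_ord.
have cB : #|B| = k by rewrite card_imset // card_ord.
have cU : #|A :|: B| = N.+1.
  have := leq_card_setU A B; rewrite dAB => -[_ /eqP ->].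
  by rewrite cA cB subnK.
have cov : A :|: B = [set: 'I_N.+1]%SET.
  apply/eqP; rewrite eqEcard finset.subsetT cardsT card_ord cU. simpl. exact: leqnn.
have -> : \sum_x F x = \sum_(x in [predU A & B]) F x.
  by apply: eq_bigl => x /=; have := finset.in_setT x; rewrite -cov inE.
rewrite bigU // !big_imset //=.
by move=> x y _ _; apply: iab.
by move=> x y _ _; apply: itr.
Qed.

Lemma is_derive_lin n (c : 'I_n -> R) (x : 'I_n -> R -> R) (dx : 'I_n -> R) (s : R) :
  (forall j, is_derive s 1 (x j) (dx j)) ->
  is_derive s 1 (fun s => \sum_j c j * x j s) (\sum_j c j * dx j).
Proof.
move=> H.
have h := @is_derive_sum _ _ _ n (fun j => c j \*: x j) s 1 (fun j => c j *: dx j)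
  (fun j => is_deriveZ (c j) (H j)).
have e : (fun s => \sum_j c j * x j s) = \sum_j (c j \*: x j).
  by apply/funext => y; rewrite fct_sumE.
by rewrite e; exact: h.
Qed.

Lemma derive1_bgs (y : R) : 0 < y -> derive1 (@bgs R) y = ln y + 1.
Proof.
move=> y0.
have h : is_derive y 1 (@bgs R) (y *: y^-1 + ln y *: 1) :=
  is_deriveM (is_derive_id y 1) (is_derive1_ln y0).
rewrite derive1E; case: h => _ ->.
by rewrite /GRing.scale /= divff ?gt_eqF // mulr1 addrC.
Qed.

Lemma wgrad_simpl n (K : 'M[R]_n) (Q : 'I_n -> R) i : (forall j, 0 < Q j) ->
  - Wgrad K (@bgs R) Q i = \sum_j K i j * (Q j - Q i).
Proof.
move=> Qp; rewrite /Wgrad opprK; apply: eq_bigr => j _.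
rewrite !derive1_bgs // -mulrA; congr (_ * _).
rewrite /logmean; case: eqP => [->|ne]; first by rewrite !subrr mulr0.
have lne : ln (Q i) - ln (Q j) != 0.
  rewrite subr_eq0; apply/eqP => e; apply: ne.
  by apply: ln_inj; rewrite ?inE ?posrE.
by field.
Qed.
End B.
Section A.
Variable R : realType.
Local Open Scope classical_set_scope.

Lemma der_cont (f df : R -> R) : (forall x : R, is_derive x 1 f (df x)) -> continuous f.
Proof.
move=> H x; apply/differentiable_continuous/derivable1_diffP.
by case: (H x).
Qed.

Lemma cont_pos_near (f : R -> R) x : {for x, continuous f} -> 0 < f x ->
  \forall y \near x, 0 < f y.
Proof. by move=> cf fx; exact: (@cvgr_gt R R (nbhs x) _ f (f x) cf 0 fx). Qed.

Lemma near_ex_delta (P : R -> Prop) x : (\forall y \near x, P y) ->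
  exists2 d, 0 < d & forall y, `|x - y| < d -> P y.
Proof.
move=> /nbhs_ballP [d d0 H]; exists d => // y Hy; by apply: H.
Qed.

Lemma first_exit n (v : 'I_n -> R -> R) (s1 : R) :
  (forall j, continuous (v j)) -> (forall j, 0 < v j 0) -> 0 <= s1 ->
  (exists j, v j s1 <= 0) ->
  exists sg, [/\ 0 <= sg, (forall t, 0 <= t <= sg -> forall j, 0 <= v j t)
    & exists j, v j sg <= 0].
Proof.
move=> cv v0 s10 [j1 hj1].
pose G := [set s | (0 <= s <= s1) /\ forall t, 0 <= t <= s -> forall j, 0 < v j t].
have G0 : G 0.
  split; first by rewrite lexx s10.
  move=> t /andP[t0 t0'] j; have -> : t = 0 by apply/eqP; rewrite eq_le t0' t0.
  exact: v0.
have ubG : ubound G s1 by move=> s [/andP[_ ?] _].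
have hsG : has_sup G by split; [exists 0 | exists s1].
set sg := sup G.
have sg0 : 0 <= sg := sup_upper_bound hsG G0.
have sgs1 : sg <= s1 := ge_sup (ex_intro _ 0 G0) ubG.
have H1 : forall t, 0 <= t < sg -> forall j, 0 < v j t.
  move=> t /andP[t0 tsg] j.
  have tsg' : 0 < sg - t by rewrite subr_gt0.
  have [e Ge lte] := sup_adherent tsg' hsG.
  have te : t < e by move: lte; rewrite opprB addrC subrK.
  by apply: Ge.2 => //; rewrite t0 ltW.
have H2 : forall j, 0 <= v j sg.
  move=> j; rewrite leNgt; apply/negP => neg.
  have nb : \forall y \near sg, v j y < 0 by exact:
    (@cvgr_lt R R (nbhs sg) _ (v j) (v j sg) (cv j sg) 0 neg).
  have [d d0 Hd] := near_ex_delta nb.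
  have [e Ge lte] := sup_adherent d0 hsG.
  have esg : e <= sg := sup_upper_bound hsG Ge.
  have : v j e < 0.
    apply: Hd; rewrite ger0_norm ?subr_ge0 //.
    by move: lte; rewrite ltrBlDr addrC -ltrBlDr.
  have : 0 < v j e.
    by case: Ge => /andP[e0 _] He; apply: He; rewrite e0 lexx.
  by move=> a b; move: (lt_trans a b); rewrite ltxx.
have H3 : exists j, v j sg <= 0.
  case: (pselect (exists j, v j sg <= 0)) => // /forallNP hall.
  have pos : forall j, 0 < v j sg by move=> j; rewrite ltNge; apply/negP/hall.
  have nb : \forall y \near sg, forall j, 0 < v j y by exact:
    (@filter_forall R _ (fun j y => 0 < v j y) (nbhs sg) _
    (fun j => cont_pos_near (cv j sg) (pos j))).
  have [d d0 Hd] := near_ex_delta nb.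
  have [sgeq|sglt] := eqVneq sg s1.
    by move: (pos j1); rewrite sgeq ltNge hj1.
  have sglt1 : sg < s1 by rewrite lt_neqAle sglt sgs1.
  pose s' := Num.min s1 (sg + d / 2).
  have Gs' : G s'.
    split.
      rewrite ge_min lexx orTb andbT le_min s10 /=.
      by rewrite addr_ge0 // divr_ge0 // ltW.
    move=> t /andP[t0 ts'] j.
    have [tlt|tge] := ltP t sg; first by apply: H1; rewrite t0 tlt.
    apply: Hd; rewrite ler0_norm ?subr_le0 // opprB.
    have : t <= sg + d / 2 by apply: le_trans ts' _; rewrite ge_min lexx orbT.
    rewrite -lerBlDl => h; apply: le_lt_trans h _.
    by rewrite ltr_pdivrMr // ltr_pMr // ltr1n.
  have : s' <= sg := sup_upper_bound hsG Gs'.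
  rewrite ge_min leNgt sglt1 /= => h.
  have : sg < sg + d / 2 by rewrite ltrDl divr_gt0.
  by rewrite ltNge h.
exists sg; split => // t /andP[t0 tsg] j.
have [tlt|tge] := ltP t sg; first by apply/ltW/H1; rewrite t0 tlt.
by have -> : t = sg by apply/eqP; rewrite eq_le tsg tge.
Qed.

Lemma is_derive_expc (c eps s : R) :
  is_derive s 1 (fun x => eps * expR (c * x)) (eps * (expR (c * s) * c)).
Proof.
have h1 : is_derive s 1 (fun x : R => c * x) c.
  have h0 : is_derive s 1 (fun x : R => c * x) (c * 1) := is_deriveZ c (is_derive_id s 1).
  by rewrite mulr1 in h0.
have h2 : is_derive s 1 (expR \o (fun x : R => c * x)) (expR (c * s) * c).
  exact: is_derive1_comp.
exact: (is_deriveZ eps h2).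
Qed.

Lemma nonneg_sol n (A : 'M[R]_n) (u : 'I_n -> R -> R) :
  (forall i j, 0 <= A i j) ->
  (forall j (s : R), is_derive s 1 (u j) (\sum_l A j l * u l s)) ->
  (forall j, 0 <= u j 0) -> forall s, 0 <= s -> forall j, 0 <= u j s.
Proof.
move=> A0 du u0 s1 s10 j.
pose c := \sum_i \sum_l A i l + 1.
have rsc : forall i, \sum_l A i l + 1 <= c.
  move=> i; rewrite lerD2r [X in _ <= X](bigD1 i) //= lerDl.
  by apply: sumr_ge0 => i' _; apply: sumr_ge0.
have key : forall eps, 0 < eps -> forall j, 0 < u j s1 + eps * expR (c * s1).
  move=> eps e0.
  pose v j s := u j s + eps * expR (c * s).
  have dv : forall j (s : R), is_derive s 1 (v j)
      (\sum_l A j l * u l s + eps * (expR (c * s) * c)).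
    move=> j' s; exact: (is_deriveD (du j' s) (is_derive_expc c eps s)).
  have cv : forall j, continuous (v j) by move=> j'; exact: der_cont (dv j').
  have v0 : forall j, 0 < v j 0.
    by move=> j'; rewrite /v mulr0 expR0 mulr1 ltr_wpDl.
  case: (pselect (exists j, v j s1 <= 0)); last first.
    by move=> /forallNP hall j'; rewrite ltNge; apply/negP/hall.
  move=> ex; have [sg [sg0 nn [j2 hj2]]] := first_exit cv v0 s10 ex.
  exfalso.
  have [sgz|sgp] := eqVneq sg 0.
    by move: hj2; rewrite sgz leNgt v0.
  have sgpos : 0 < sg by rewrite lt_neqAle eq_sym sgp sg0.
  have [c' c'in eqm] := MVT sgpos (fun x _ => dv j2 x)
    (continuous_subspaceT (cv j2)).
  move: c'in; rewrite in_itv /= => /andP[c'0 c'sg].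
  set ee := eps * expR (c * c').
  have ee0 : 0 < ee by rewrite /ee mulr_gt0 // expR_gt0.
  have S1 : \sum_l A j2 l * (- ee) <= \sum_l A j2 l * u l c'.
    apply: ler_sum => l _; apply: ler_wpM2l => //.
    have := nn c' _ l; rewrite /v -/ee; rewrite (ltW c'0) (ltW c'sg) => /(_ isT).
    by rewrite -lerBlDr sub0r.
  rewrite -mulr_suml in S1.
  have rs := rsc j2.
  have D : 0 < \sum_l A j2 l * u l c' + eps * (expR (c * c') * c).
    rewrite mulrA -/ee; nra.
  have : v j2 sg - v j2 0 > 0 by rewrite eqm subr0 mulr_gt0.
  by rewrite subr_gt0 => h; move: (lt_le_trans (lt_trans (v0 j2) h) hj2); rewrite ltxx.
rewrite leNgt; apply/negP => neg.
have E0 : 0 < expR (c * s1) := expR_gt0 _.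
have := key (- u j s1 / (2 * expR (c * s1))) _ j.
have -> : - u j s1 / (2 * expR (c * s1)) * expR (c * s1) = - u j s1 / 2.
  by field; rewrite gt_eqF.
have h : 0 < - u j s1 / (2 * expR (c * s1)).
  by rewrite divr_gt0 ?oppr_gt0 // mulr_gt0.
move=> /(_ h); lra.
Qed.

Lemma pos_sol n (A : 'M[R]_n) (u : 'I_n -> R -> R) :
  (forall i j, 0 <= A i j) ->
  (forall i j, exists m : nat, 0 < (A ^+ m) i j) ->
  (forall j (s : R), is_derive s 1 (u j) (\sum_l A j l * u l s)) ->
  (forall j, 0 <= u j 0) -> (exists j0, 0 < u j0 0) ->
  forall s, 0 < s -> forall i, 0 < u i s.
Proof.
move=> A0 irr du u0 [j0 hj0].
have nn := nonneg_sol A0 du u0.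
have mvt : forall i s, 0 < s -> exists2 c, 0 < c < s &
    u i s - u i 0 = (\sum_l A i l * u l c) * s.
  move=> i s s0.
  have [c cin eq] := MVT s0 (fun x _ => du i x)
    (continuous_subspaceT (der_cont (du i))).
  by exists c; [move: cin; rewrite in_itv | rewrite eq subr0].
have edge : forall l j, 0 < A l j -> (forall s, 0 < s -> 0 < u j s) ->
    forall s, 0 < s -> 0 < u l s.
  move=> l j Alj Hj s s0.
  have [c /andP[c0 cs] eq] := mvt l s s0.
  have D : 0 < \sum_k A l k * u k c.
    rewrite (bigD1 j) //=; apply: lt_le_trans (_ : A l j * u j c <= _).
      by rewrite mulr_gt0 // Hj.
    rewrite lerDl; apply: sumr_ge0 => k _; apply: mulr_ge0 => //.
    by apply: nn; rewrite ltW.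
  have : 0 < u l s - u l 0 by rewrite eq mulr_gt0.
  by rewrite subr_gt0; apply: le_lt_trans (u0 l).
have base : forall s, 0 < s -> 0 < u j0 s.
  move=> s s0; have [c /andP[c0 cs] eq] := mvt j0 s s0.
  have D : 0 <= \sum_k A j0 k * u k c.
    apply: sumr_ge0 => k _; apply: mulr_ge0 => //.
    by apply: nn; rewrite ltW.
  have : 0 <= u j0 s - u j0 0 by rewrite eq mulr_ge0 // ltW.
  by rewrite subr_ge0; apply: lt_le_trans.
have path : forall m i j, 0 < (A ^+ m) i j -> (forall s, 0 < s -> 0 < u j s) ->
    forall s, 0 < s -> 0 < u i s.
  elim=> [|m IH] i j.
    rewrite expr0 mxE; case: eqP => [->|]; first by [].
    by rewrite ltxx.
  rewrite exprSr mxE => h Hj.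
  have [l hl] : exists l, 0 < (A ^+ m) i l * A l j.
    case: (pselect (exists l, 0 < (A ^+ m) i l * A l j)) => // /forallNP hall.
    exfalso; move: h; apply/negP; rewrite -leNgt; apply: sumr_le0 => l _.
    by rewrite leNgt; apply/negP/hall.
  have Alj : 0 < A l j.
    rewrite lt_neqAle A0 andbT; apply/eqP => e; move: hl; rewrite -e mulr0 ltxx.
    by [].
  have Ail : 0 < (A ^+ m) i l by move: hl; rewrite pmulr_lgt0.
  exact: IH Ail (edge l j Alj Hj).
move=> s s0 i.
have [m hm] := irr i j0.
exact: path hm base s s0.
Qed.
End A.

Lemma is_derive_expc1 (R : realType) (c s : R) :
  is_derive s 1 (fun x => expR (c * x)) (expR (c * s) * c).
Proof.
have h1 : is_derive s 1 (fun x : R => c * x) c.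
  have h0 : is_derive s 1 (fun x : R => c * x) (c * 1) := is_deriveZ c (is_derive_id s 1).
  by rewrite mulr1 in h0.
exact: (is_derive1_comp (f := expR) (g := fun x : R => c * x) _ h1).
Qed.

Lemma is_derive_scal (R : realType) (c s : R) :
  is_derive s 1 (fun x : R => c * x) c.
Proof.
have h0 : is_derive s 1 (fun x : R => c * x) (c * 1) := is_deriveZ c (is_derive_id s 1).
by rewrite mulr1 in h0.
Qed.
Theorem theorem2 (R : realType) (N k : nat) (M : 'M[R]_N.+1)
  (tr : 'I_(N.+1 - k) -> 'I_N.+1) (ab : 'I_k -> 'I_N.+1)
  (mu : R) (w z : 'I_(N.+1 - k) -> R) (p : R -> 'cV[R]_N.+1) :
  admissible M tr ab ->
  char_triple (core M tr) mu w z ->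
  micro_reversible (core M tr) w z ->
  (* p solves dp/dt = (M - I) p *)
  (forall (t : R) (i : 'I_N.+1),
      is_derive t 1 (fun s => p s i 0) (((M - 1%:M) *m p t) i 0)) ->
  (* p(0) is a probability vector with nonzero transient part *)
  (forall i, 0 <= p 0 i 0) -> \sum_i p 0 i 0 = 1 ->
  (exists i, p 0 (tr i) 0 <> 0) ->
  let K := Qkernel (core M tr) mu w in
  let pi := statmeas w z in
  let q := qflow p tr mu w in
  (* gradient flow of H(.|pi) w.r.t. W_N, written in the density Q = q/pi *)
  (forall (t : R) (i : 'I_(N.+1 - k)), 0 < t ->
      is_derive t 1 (fun s => q s i / pi i)
        (- Wgrad K (@bgs R) (fun j => q t j / pi j) i)) /\
  (* p is recovered from q and p(0) *)
  (let S0 := \sum_j w j * p 0 (tr j) 0 in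
   let pt := fun (s : R) (j : 'I_(N.+1 - k)) =>
               S0 * expR ((mu - 1) * s) * q (mu * s) j / w j in
   forall t : R, 0 <= t ->
     (forall i, p t (tr i) 0 = pt t i) /\
     (forall a, p t (ab a) 0 =
        p 0 (ab a) 0 +
        \int[lebesgue_measure]_(s in `[0, t]%classic)
           (\sum_j M (ab a) (tr j) * pt s j))).
Proof.
move=> [[k1 kN] [Mnn Mcol] [itr [iab dis]] [Mtrab Mabab] [[_ irr] Mabtr]].
move=> [[_ /andP[mu0 mu1]] [w0 z0] [wM Mz] [sw swz]] mr dp p0nn p0sum [i0 hi0].
move=> K pi q.
set Mt := core M tr in wM Mz mr irr *.
have MtE : forall i j, Mt i j = M (tr i) (tr j) by move=> i j; rewrite mxE.
have kN1 : (k <= N.+1)%N by apply: leq_trans (ltnW kN) _; apply: leq_trans (leq_subr 1 N) _.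
have split := fun F => @sum_split R N k tr ab F kN1 itr iab dis.
pose x j (s : R) : R := p s (tr j) 0.
have dtr : forall j s, ((M - 1%:M) *m p s) (tr j) 0 = \sum_l Mt j l * x l s - x j s.
  move=> j s; rewrite mxE split.
  rewrite [X in _ + X]big1 ?addr0; last first.
    move=> a _; rewrite !mxE Mtrab.
    have -> : (tr j == ab a) = false by apply/eqP.
    by rewrite subr0 mul0r.
  rewrite (eq_bigr (fun l => Mt j l * x l s - (j == l)%:R * x l s)); last first.
    by move=> l _; rewrite !mxE (inj_eq itr) mulrBl.
  rewrite sumrB [X in _ - X](bigD1 j) //= eqxx mul1r [X in _ - (_ + X)]big1 ?addr0 //.
  by move=> l /negbTE; rewrite eq_sym => ->; rewrite mul0r.
have dab : forall a s, ((M - 1%:M) *m p s) (ab a) 0 = \sum_l M (ab a) (tr l) * x l s.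
  move=> a s; rewrite mxE split.
  rewrite [X in _ + X]big1 ?addr0; last first.
    by move=> b _; rewrite !mxE Mabab (inj_eq iab) subrr mul0r.
  apply: eq_bigr => l _; rewrite !mxE.
  have -> : (ab a == tr l) = false by apply/eqP => e; apply: (dis l a); rewrite e.
  by rewrite subr0.
have dx : forall j (s : R), is_derive s 1 (x j) (\sum_l Mt j l * x l s - x j s).
  by move=> j s; rewrite -dtr; exact: dp.
have Mt0 : forall i j, 0 <= Mt i j by move=> i j; rewrite MtE.
pose u j (s : R) : R := expR s * x j s.
have du : forall j (s : R), is_derive s 1 (u j) (\sum_l Mt j l * u l s).
  move=> j s.
  have h := is_deriveM (is_derive_expR s) (dx j s).
  apply: (is_derive_eq h).
  have -> : \sum_l Mt j l * u l s = expR s * \sum_l Mt j l * x l s.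
    by rewrite mulr_sumr; apply: eq_bigr => l _; rewrite /u mulrCA.
  rewrite /GRing.scale /=; ring.
have u0 : forall j, 0 <= u j 0 by move=> j; rewrite /u expR0 mul1r; exact: p0nn.
have ex0 : exists j0, 0 < u j0 0.
  exists i0; rewrite /u expR0 mul1r lt_neqAle eq_sym; apply/andP; split.
    by apply/eqP; exact: hi0.
  exact: p0nn.
have upos := pos_sol Mt0 irr du u0 ex0.
have xpos : forall s, 0 < s -> forall j, 0 < x j s.
  by move=> s s0 j; have := upos s s0 j; rewrite /u pmulr_rgt0 // expR_gt0.
have x0pos : 0 < x i0 0.
  rewrite lt_neqAle eq_sym; apply/andP; split; first by apply/eqP; exact: hi0.
  exact: p0nn.
pose S (s : R) : R := \sum_j w j * x j s.
have dS : forall s : R, is_derive s 1 S ((mu - 1) * S s).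
  move=> s; apply: (is_derive_eq (is_derive_lin w (fun j => dx j s))).
  rewrite (eq_bigr (fun j => \sum_l w j * Mt j l * x l s - w j * x j s)); last first.
    move=> j _; rewrite mulrBr mulr_sumr; congr (_ - _).
    by apply: eq_bigr => l _; rewrite mulrA.
  rewrite sumrB exchange_big /=.
  rewrite (eq_bigr (fun l => mu * (w l * x l s))); last first.
    by move=> l _; rewrite -mulr_suml wM mulrA.
  by rewrite -mulr_sumr /S mulrBl mul1r.
have Scst : forall s : R, S s = S 0 * expR ((mu - 1) * s).
  move=> s.
  have h : forall y : R, is_derive y 1 (fun y => S y * expR ((1 - mu) * y)) 0.
    move=> y; apply: (is_derive_eq (is_deriveM (dS y) (is_derive_expc1 (1 - mu) y))).
    rewrite /GRing.scale /=; ring.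
  have := is_derive_0_is_cst s 0 h; rewrite mulr0 expR0 mulr1 => e.
  rewrite -e -mulrA -expRD.
  have -> : (1 - mu) * s + (mu - 1) * s = 0 by ring.
  by rewrite expR0 mulr1.
have S0pos : 0 < S 0.
  rewrite /S (bigD1 i0) //=.
  have a : 0 < w i0 * x i0 0 by rewrite mulr_gt0.
  have b : 0 <= \sum_(i < N.+1 - k | i != i0) w i * x i 0.
    by apply: sumr_ge0 => i _; apply: mulr_ge0; [exact: ltW | exact: p0nn].
  lra.
have Spos : forall s : R, 0 < S s by move=> s; rewrite Scst mulr_gt0 // expR_gt0.
have ptE : forall (s : R) j, S 0 * expR ((mu - 1) * s) * q (mu * s) j / w j = x j s.
  move=> s j; rewrite /q /qflow.
  have -> : mu * s / mu = s by field; rewrite gt_eqF.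
  rewrite -/(x j s) -/(S s) -Scst.
  by field; rewrite !gt_eqF.
split; last first.
  move=> S0 pt t t0.
  have ptx : forall (s : R) j, pt s j = x j s by move=> s j; exact: ptE s j.
  split; first by move=> i; rewrite ptx.
  move=> a.
  pose g (s : R) : R := \sum_j M (ab a) (tr j) * x j s.
  have -> : (fun s => \sum_j M (ab a) (tr j) * pt s j) = g.
    by apply/funext => s; apply: eq_bigr => j _; rewrite ptx.
  pose F (s : R) : R := p s (ab a) 0.
  have dF : forall s : R, is_derive s 1 F (g s).
    by move=> s; rewrite /g -dab; exact: dp.
  have gc : continuous g.
    apply: (@der_cont _ g (fun s => \sum_j M (ab a) (tr j) * (\sum_l Mt j l * x l s - x j s))).
    by move=> s; exact: (is_derive_lin _ (fun j => dx j s)).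
  have Fc : continuous F by exact: (der_cont dF).
  have [tz|tnz] := eqVneq t 0.
    by rewrite tz set_itv1 Rintegral_set1 addr0.
  have tpos : 0 < t by rewrite lt_neqAle eq_sym tnz t0.
  rewrite /Rintegral (@continuous_FTC2 R g F 0 t tpos).
  - by rewrite -EFinB /= addrC subrK.
  - exact: continuous_subspaceT.
  - split.
    + by move=> y _; case: (dF y).
    + exact: cvg_at_right_filter (Fc 0).
    + exact: cvg_at_left_filter (Fc t).
  - by move=> y _; rewrite derive1E; case: (dF y) => _ ->.
move=> t i t0.
have mun : mu != 0 by rewrite gt_eqF.
have qE : forall (s : R) j, q s j = w j * x j (mu^-1 * s) / S (mu^-1 * s).
  by move=> s j; rewrite [mu^-1 * s]mulrC.
set sg := mu^-1 * t.
have sg0 : 0 < sg by rewrite /sg mulr_gt0 // invr_gt0.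
have Qpos : forall j, 0 < q t j / pi j.
  move=> j; rewrite qE -/sg /pi /statmeas.
  by rewrite !divr_gt0 ?mulr_gt0 // xpos.
rewrite (wgrad_simpl _ _ Qpos).
pose c := (1 - mu) / mu.
pose C := (S 0 * z i)^-1.
have expE : forall s : R, expR (c * s) = (expR ((mu - 1) * (mu^-1 * s)))^-1.
  by move=> s; rewrite -expRN; congr expR; rewrite /c; field.
have fE : (fun s => q s i / pi i) = fun s => C * (x i (mu^-1 * s) * expR (c * s)).
  apply/funext => s; rewrite qE /pi /statmeas Scst expE /C.
  by field; rewrite ?gt_eqF ?expR_gt0 ?mulr_gt0 ?expR_gt0.
rewrite fE.
have KE : forall i j, K i j = mu^-1 * (w i)^-1 * Mt j i * w j.
  by move=> i' j'; rewrite /K /Qkernel mxE.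
have h1 : is_derive t 1 (fun s => x i (mu^-1 * s))
    ((\sum_l Mt i l * x l sg - x i sg) * mu^-1).
  exact: (is_derive1_comp (f := x i) (g := fun s : R => mu^-1 * s) (dx i sg)
    (is_derive_scal mu^-1 t)).
apply: (is_derive_eq (is_deriveZ C (is_deriveM h1 (is_derive_expc1 c t)))).
rewrite [RHS](eq_bigr (fun j => (expR (c * t) * C / mu) *
    (Mt i j * x j sg - Mt i j * z j * (x i sg / z i)))); last first.
  move=> j _; rewrite KE !qE -/sg /pi /statmeas.
  have e : Mt j i = w i * Mt i j * z j / (w j * z i).
    by rewrite mr; field; rewrite ?gt_eqF.
  rewrite e Scst expE /C.
  by field; rewrite ?gt_eqF ?expR_gt0 ?mulr_gt0 ?expR_gt0.
rewrite -mulr_sumr sumrB -mulr_suml Mz /GRing.scale /= /C /c.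
by field; rewrite ?gt_eqF ?mulr_gt0.
Qed.
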